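(* Let $A$ be a commutative ring and $C$ a commutative noetherian $A$-algebra. If a $D(C,A)$-module $M$ has finite length in the category of $D(C,A)$-modules, then $M$ has only finitely many associated primes as a $C$-module; moreover, every simple $D(C,A)$-module has exactly one associated prime as a $C$-module.
   Context: $D(C,A)$ denotes the ring of $A$-linear differential operators on $C$: for $r\in C$, multiplication by $r$ is a differential operator of order $0$; an additive map $\delta:C\to C$ is a differential operator of order $\le n$ ($n\ge1$) if all commutators $r\circ\delta-\delta\circ r$ ($r\in C$) have order $\le n-1$; $D(C,A)$ consists of all such operators that are $A$-linear. *)

(* Defs.v *)
From HB Require Import structures.
From mathcomp Require Import all_boot all_order all_algebra.
Set Implicit Arguments. Unset Strict Implicit. Unset Printing Implicit Defensive.
Import GRing.Theory.
Local Open Scope ring_scope.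

Definition is_ideal (C : comPzRingType) (I : C -> Prop) : Prop :=
  [/\ I 0, (forall x y, I x -> I y -> I (x + y)) & (forall r x, I x -> I (r * x))].

Definition is_prime_ideal (C : comPzRingType) (P : C -> Prop) : Prop :=
  [/\ is_ideal P, ~ P 1 & (forall x y, P (x * y) -> P x \/ P y)].

Definition noetherian (C : comPzRingType) : Prop :=
  forall I : nat -> C -> Prop,
    (forall n, is_ideal (I n)) ->
    (forall n x, I n x -> I n.+1 x) ->
    exists N, forall n, (N <= n)%N -> forall x, I n x <-> I N x.

Definition additive_map (C : comPzRingType) (d : C -> C) : Prop :=
  forall x y, d (x + y) = d x + d y.

Fixpoint diff_order_le (C : comPzRingType) (n : nat) (d : C -> C) : Prop :=
  match n with
  | 0%N => exists r : C, forall x, d x = r * x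
  | k.+1 => additive_map d /\
            forall r : C, diff_order_le k (fun x => r * d x - d (r * x))
  end.

Definition A_linear (A C : comPzRingType) (f : {rmorphism A -> C}) (d : C -> C) :=
  forall (a : A) (x : C), d (f a * x) = f a * d x.

Definition in_DCA (A C : comPzRingType) (f : {rmorphism A -> C}) (d : C -> C) :=
  [/\ additive_map d, A_linear f d & exists n, diff_order_le n d].

(* act d m is the action of d in D(C,A) on m; only its values on d in D(C,A)
   are meaningful. The ring structure of D(C,A) is pointwise addition and
   composition, with unit the identity. *)
Definition is_DCA_module (A C : comPzRingType) (f : {rmorphism A -> C})
    (M : zmodType) (act : (C -> C) -> M -> M) : Prop :=
  [/\ (forall d e, in_DCA f d -> (forall x, d x = e x) -> forall m, act d m = act e m),
      forall d, in_DCA f d -> forall m1 m2, act d (m1 + m2) = act d m1 + act d m2,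
      forall d e, in_DCA f d -> in_DCA f e ->
        forall m, act (fun x => d x + e x) m = act d m + act e m,
      forall d e, in_DCA f d -> in_DCA f e ->
        forall m, act (fun x => d (e x)) m = act d (act e m)
    & forall m, act id m = m].

Definition is_Dsubmodule (A C : comPzRingType) (f : {rmorphism A -> C})
    (M : zmodType) (act : (C -> C) -> M -> M) (N : M -> Prop) : Prop :=
  [/\ N 0, (forall x y, N x -> N y -> N (x - y))
    & (forall d x, in_DCA f d -> N x -> N (act d x))].

Definition sub_pred (M : Type) (N N' : M -> Prop) := forall x, N x -> N' x.

Definition simple_step (A C : comPzRingType) (f : {rmorphism A -> C})
    (M : zmodType) (act : (C -> C) -> M -> M) (N' N : M -> Prop) : Prop :=
  [/\ sub_pred N' N, ~ sub_pred N N' &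
      forall L, is_Dsubmodule f act L -> sub_pred N' L -> sub_pred L N ->
        sub_pred L N' \/ sub_pred N L].

Definition finite_length_D (A C : comPzRingType) (f : {rmorphism A -> C})
    (M : zmodType) (act : (C -> C) -> M -> M) : Prop :=
  exists (n : nat) (S : nat -> M -> Prop),
    [/\ forall i, is_Dsubmodule f act (S i),
        (forall x, S 0%N x <-> x = 0),
        (forall x, S n x) &
        forall i, (i < n)%N -> simple_step f act (S i) (S i.+1)].

Definition simple_D (A C : comPzRingType) (f : {rmorphism A -> C})
    (M : zmodType) (act : (C -> C) -> M -> M) : Prop :=
  (exists m : M, m <> 0) /\
  forall L, is_Dsubmodule f act L -> (forall x, L x -> x = 0) \/ (forall x, L x).

Definition cact (C : comPzRingType) (M : zmodType) (act : (C -> C) -> M -> M)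
    (r : C) (m : M) : M := act (fun x => r * x) m.

Definition associated_prime (C : comPzRingType) (M : zmodType)
    (act : (C -> C) -> M -> M) (P : C -> Prop) : Prop :=
  is_prime_ideal P /\ exists m : M, forall r, P r <-> cact act r m = 0.

(* Main.v *)
Require Import Defs.
From HB Require Import structures.
From mathcomp Require Import all_boot all_order all_algebra.
From Stdlib Require List.
From Stdlib Require Import Classical ClassicalEpsilon FunctionalExtensionality.
Set Implicit Arguments. Unset Strict Implicit. Unset Printing Implicit Defensive.
Import GRing.Theory.
Local Open Scope ring_scope.

Section Ops.
Variables (A C : comPzRingType) (f : {rmorphism A -> C}).

Lemma mul_DCA (r : C) : in_DCA f (fun x => r * x).
Proof.
split.
- by move=> x y; rewrite mulrDr.
- by move=> a x; rewrite mulrCA.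
- by exists 0%N; exists r.
Qed.

Lemma order_compr (n : nat) (p : C) (d : C -> C) :
  diff_order_le n d -> diff_order_le n (fun y => d (p * y)).
Proof.
elim: n d => [|n IH] d /=.
- by case=> r Hr; exists (r * p) => x; rewrite Hr mulrA.
- case=> Had Hr; split.
  + by move=> x y; rewrite mulrDr Had.
  + move=> r.
    have -> : (fun x => r * d (p * x) - d (p * (r * x))) =
              (fun y => (fun x => r * d x - d (r * x)) (p * y)).
      by apply: functional_extensionality => x /=; rewrite mulrCA.
    exact: (IH (fun x => r * d x - d (r * x)) (Hr r)).
Qed.

Lemma DCA_compr (p : C) (d : C -> C) : in_DCA f d -> in_DCA f (fun y => d (p * y)).
Proof.
case=> Had Hl [n Hn]; split.
- by move=> x y; rewrite mulrDr Had.
- by move=> a x; rewrite mulrCA Hl.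
- by exists n; apply: order_compr.
Qed.

Lemma DCA_comm (p : C) (d : C -> C) k : in_DCA f d -> diff_order_le k.+1 d ->
  in_DCA f (fun x => p * d x - d (p * x)).
Proof.
case=> Had Hl _ [_ Hk]; split.
- move=> x y /=; rewrite Had mulrDr mulrDr Had.
  by rewrite opprD addrACA.
- move=> a x; rewrite Hl mulrCA [p * (f a * x)]mulrCA Hl.
  by rewrite -mulrBr.
- by exists k; apply: Hk.
Qed.
End Ops.

Section Mod.
Variables (A C : comPzRingType) (f : {rmorphism A -> C}) (M : zmodType)
  (act : (C -> C) -> M -> M).
Hypothesis Hmod : is_DCA_module f act.

Lemma act_add d : in_DCA f d -> forall x y, act d (x + y) = act d x + act d y.
Proof. by case: Hmod => _ H _ _ _; apply: H. Qed.

Lemma act_comp d e : in_DCA f d -> in_DCA f e ->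
  forall m, act (fun x => d (e x)) m = act d (act e m).
Proof. by case: Hmod => _ _ _ H _; apply: H. Qed.

Lemma act_sum d e : in_DCA f d -> in_DCA f e ->
  forall m, act (fun x => d x + e x) m = act d m + act e m.
Proof. by case: Hmod => _ _ H _ _; apply: H. Qed.

Lemma act0 d : in_DCA f d -> act d 0 = 0.
Proof.
move=> Hd; have := act_add Hd 0 0; rewrite addr0.
by move=> /(congr1 (fun z => z - act d 0)); rewrite subrr addrK => <-.
Qed.

Lemma act_sub d : in_DCA f d -> forall x y, act d (x - y) = act d x - act d y.
Proof.
move=> Hd x y; have := act_add Hd (x - y) y; rewrite subrK => ->.
by rewrite addrK.
Qed.

Lemma cact_comp r s m : cact act r (cact act s m) = cact act (r * s) m.
Proof.
rewrite /cact -(act_comp (mul_DCA f r) (mul_DCA f s)).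
by congr act; apply: functional_extensionality => x; rewrite mulrA.
Qed.

Lemma cact1 m : cact act 1 m = m.
Proof.
rewrite /cact; have -> : (fun x : C => 1 * x) = id.
  by apply: functional_extensionality => x; rewrite mul1r.
by case: Hmod.
Qed.

Lemma cactD r s m : cact act (r + s) m = cact act r m + cact act s m.
Proof.
rewrite /cact -(act_sum (mul_DCA f r) (mul_DCA f s)).
by congr act; apply: functional_extensionality => x; rewrite mulrDl.
Qed.

Lemma cact0r m : cact act 0 m = 0.
Proof.
rewrite /cact.
have := act_sum (mul_DCA f 0) (mul_DCA f 0) m.
have -> : (fun x : C => 0 * x + 0 * x) = (fun x => 0 * x).
  by apply: functional_extensionality => x; rewrite !mul0r addr0.
by move=> /(congr1 (fun z => z - act (fun x => 0 * x) m)); rewrite subrr addrK => <-.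
Qed.

Lemma cactr0 r : cact act r 0 = 0.
Proof. exact: act0 (mul_DCA f r). Qed.

Fixpoint tors (S : M -> Prop) (P : C -> Prop) (n : nat) (x : M) : Prop :=
  match n with
  | 0%N => S x
  | k.+1 => forall p, P p -> tors S P k (cact act p x)
  end.

Variables (S : M -> Prop) (P : C -> Prop).
Hypothesis HS : is_Dsubmodule f act S.

Lemma S_act d x : in_DCA f d -> S x -> S (act d x).
Proof. by case: HS => _ _ H; apply: H. Qed.

Lemma tors_S n x : S x -> tors S P n x.
Proof.
elim: n x => [|n IH] x Sx //= p _; apply: IH; exact: S_act (mul_DCA f p) Sx.
Qed.

Lemma tors_mono n x : tors S P n x -> tors S P n.+1 x.
Proof.
elim: n x => [|n IH] x /=.
- by move=> Sx p _; apply: S_act (mul_DCA f p) Sx.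
- by move=> H p Pp; apply: IH; apply: H.
Qed.

Lemma tors_monoD n k x : tors S P n x -> tors S P (n + k) x.
Proof.
elim: k => [|k IH]; first by rewrite addn0.
by move=> H; rewrite addnS; apply: tors_mono; apply: IH.
Qed.

Lemma tors_sub n x y : tors S P n x -> tors S P n y -> tors S P n (x - y).
Proof.
elim: n x y => [|n IH] x y /=.
- by case: HS => _ H _; apply: H.
- move=> Hx Hy p Pp; rewrite /cact act_sub; last exact: mul_DCA.
  by apply: IH; [apply: Hx | apply: Hy].
Qed.

Lemma tors0 n : tors S P n 0.
Proof. by apply: tors_S; case: HS. Qed.

Lemma tors_add n x y : tors S P n x -> tors S P n y -> tors S P n (x + y).
Proof.
move=> Hx Hy; have -> : x + y = x - (0 - y) by rewrite sub0r opprK.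
by apply: tors_sub => //; apply: tors_sub => //; apply: tors0.
Qed.

Lemma tors_cact n r x : tors S P n x -> tors S P n (cact act r x).
Proof.
elim: n x => [|n IH] x /=.
- by move=> Sx; apply: S_act (mul_DCA f r) Sx.
- move=> H p Pp; rewrite cact_comp mulrC -cact_comp.
  by apply: IH; apply: H.
Qed.

Lemma tors_act k d : in_DCA f d -> diff_order_le k d ->
  forall n x, tors S P n x -> tors S P (n + k) (act d x).
Proof.
elim: k d => [|k IHk] d Hd.
- case=> r Hr n x Hx; rewrite addn0.
  have -> : d = (fun x => r * x) by apply: functional_extensionality.
  exact: tors_cact.
- move=> Hk; have [Had Hk'] := Hk.
  elim=> [|n IHn] x Hx.
  + by apply: tors_S; apply: S_act.
  + rewrite addSn /= => p Pp.
    rewrite /cact -(act_comp (mul_DCA f p) Hd).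
    have -> : (fun x0 => p * d x0) =
       (fun x0 => (fun y => p * d y - d (p * y)) x0 + (fun y => d (p * y)) x0).
      by apply: functional_extensionality => y /=; rewrite subrK.
    rewrite (act_sum (DCA_comm p Hd Hk) (DCA_compr p Hd)).
    apply: tors_add.
    * rewrite -addSnnS; exact: (IHk _ (DCA_comm p Hd Hk) (Hk' p) n.+1 x Hx).
    * rewrite (act_comp Hd (mul_DCA f p)); apply: IHn; exact: Hx.
Qed.

Lemma tors_pow n x r : P r -> tors S P n x -> S (cact act (r ^+ n) x).
Proof.
move=> Pr; elim: n x => [|n IH] x /=.
- by rewrite expr0 cact1.
- by move=> H; rewrite exprSr -cact_comp; apply: IH; apply: H.
Qed.

Lemma tors_sub_mod (T : M -> Prop) : is_Dsubmodule f act T ->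
  is_Dsubmodule f act (fun x => T x /\ exists n, tors S P n x).
Proof.
case=> T0 Tsub Tact; split.
- by split => //; exists 0%N; case: HS.
- move=> x y [Tx [n Hx]] [Ty [m Hy]]; split; first exact: Tsub.
  exists (n + m)%N; apply: tors_sub; first exact: tors_monoD.
  by rewrite addnC; apply: tors_monoD.
- move=> d x Hd [Tx [n Hx]]; split; first exact: Tact.
  have [_ _ [k Hk]] := Hd.
  by exists (n + k)%N; apply: tors_act.
Qed.

End Mod.

Section Primes.
Variables (C : comPzRingType) (P : C -> Prop).
Hypothesis HP : is_prime_ideal P.

Lemma prime_pow r k : ~ P r -> ~ P (r ^+ k).
Proof.
case: HP => _ P1 Pm Pr; elim: k => [|k IH]; first by rewrite expr0.
by rewrite exprSr => /Pm [].
Qed.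

Lemma prime_mulr s t : ~ P t -> (P (s * t) <-> P s).
Proof.
case: HP => [[_ _ Pid]] _ Pm Pt; split.
- by case/Pm.
- by move=> Ps; rewrite mulrC; apply: Pid.
Qed.

Lemma prime_pow_in r k : P (r ^+ k) -> P r.
Proof. move=> H; apply: NNPP => Hr; exact: prime_pow Hr H. Qed.
End Primes.

Section Part1.
Variables (A C : comPzRingType) (f : {rmorphism A -> C}) (M : zmodType)
  (act : (C -> C) -> M -> M).
Hypothesis Hmod : is_DCA_module f act.
Variables (N : nat) (S : nat -> M -> Prop).
Hypotheses (HS : forall i, is_Dsubmodule f act (S i))
  (HS0 : forall x, S 0%N x <-> x = 0)
  (Hstep : forall i, (i < N)%N -> simple_step f act (S i) (S i.+1)).

Definition Qi (i : nat) (r : C) : Prop :=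
  forall x, S i.+1 x -> exists k, S i (cact act (r ^+ k) x).

Lemma part1_aux i : (i <= N)%N -> forall P m, is_prime_ideal P ->
  (forall r, P r <-> cact act r m = 0) -> S i m ->
  exists2 j, (j < i)%N & forall r, P r <-> Qi j r.
Proof.
elim: i => [|i IH] Hi P m HP Hm Sm.
- exfalso; have m0 : m = 0 by apply/HS0.
  case: HP => _ P1 _; apply: P1; apply/Hm; rewrite m0; exact: (cactr0 Hmod).
- have HiN : (i < N)%N by [].
  have Hi' : (i <= N)%N by apply: ltnW.
  case: (classic (S i m)) => Sim.
  + have [j ji Hj] := IH Hi' P m HP Hm Sim.
    by exists j => //; apply: ltnW.
  + have [Hsub Hnsub Hmax] := Hstep HiN.
    pose L := fun x => S i.+1 x /\ exists n, tors act (S i) P n x.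
    have HL : is_Dsubmodule f act L := tors_sub_mod Hmod P (HS i) (HS i.+1).
    have Hall : forall x, S i.+1 x -> exists n, tors act (S i) P n x.
      case: (Hmax L HL).
      * by move=> x Sx; split; [apply: Hsub | exists 0%N].
      * by move=> x [Sx _].
      * move=> HLS; exfalso; apply: Sim; apply: HLS; split => //.
        exists 1%N => p Pp /=.
        have -> : cact act p m = 0 by apply/Hm.
        by case: (HS i).
      * by move=> HL' x Sx; case: (HL' x Sx).
    case: (classic (exists r, Qi i r /\ ~ P r)) => [[r [Qr Pr]]|Hno].
    + have [k Hk] := Qr m Sm.
      have Hm' : forall s, P s <-> cact act s (cact act (r ^+ k) m) = 0.
        move=> s; rewrite (cact_comp Hmod); split.
        * by move=> Ps; apply/Hm; apply/(@prime_mulr _ _ HP s _ (@prime_pow _ _ HP r k Pr)).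
        * by move/Hm/(@prime_mulr _ _ HP s _ (@prime_pow _ _ HP r k Pr)).
      have [j ji Hj] := IH Hi' P _ HP Hm' Hk.
      by exists j => //; apply: ltnW.
    + exists i => // r; split.
      * move=> Pr x Sx; have [n Hn] := Hall x Sx; exists n.
        exact: (tors_pow Hmod Pr Hn).
      * move=> Qr; apply: NNPP => Pr; apply: Hno; exists r; split => //.
Qed.
End Part1.

Section Part2.
Variables (A C : comPzRingType) (f : {rmorphism A -> C}) (M : zmodType)
  (act : (C -> C) -> M -> M).
Hypothesis Hmod : is_DCA_module f act.

Definition ann (m : M) (r : C) := cact act r m = 0.

Lemma ann_ideal m : is_ideal (ann m).
Proof.
split; rewrite /ann.
- exact: cact0r Hmod m.
- by move=> x y Hx Hy; rewrite (cactD Hmod) Hx Hy addr0.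
- by move=> r x Hx; rewrite -(cact_comp Hmod) Hx (cactr0 Hmod).
Qed.

Lemma ann_sub m x s : ann m s -> ann (cact act x m) s.
Proof.
rewrite /ann (cact_comp Hmod) mulrC -(cact_comp Hmod) => ->; exact: cactr0 Hmod x.
Qed.

Definition maximal (m : M) := m <> 0 /\ forall x, cact act x m <> 0 ->
   forall s, ann (cact act x m) s -> ann m s.

Lemma maximal_prime m : maximal m -> is_prime_ideal (ann m).
Proof.
case=> m0 Hmax; split.
- exact: ann_ideal.
- by rewrite /ann (cact1 Hmod).
- move=> x y Hxy; case: (classic (ann m x)) => Hx; first by left.
  right; apply: (Hmax x Hx); rewrite /ann (cact_comp Hmod) mulrC; exact: Hxy.
Qed.

Hypothesis HC : noetherian C.

Lemma exists_maximal (m0 : M) : m0 <> 0 -> exists m, maximal m.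
Proof.
move=> Hm0; apply: NNPP => Hno.
have step : forall m, m <> 0 -> exists m', m' <> 0 /\ (exists x, m' = cact act x m) /\
   exists s, ann m' s /\ ~ ann m s.
  move=> m Hm; apply: NNPP => H; apply: Hno; exists m; split => // x Hx s Hs.
  apply: NNPP => Hs'; apply: H; exists (cact act x m); split => //; split; first by exists x.
  by exists s.
pose g m := epsilon (inhabits (0 : M)) (fun m' => m <> 0 -> m' <> 0 /\
   (exists x, m' = cact act x m) /\ exists s, ann m' s /\ ~ ann m s).
have Hg : forall m, m <> 0 -> g m <> 0 /\ (exists x, g m = cact act x m) /\
   exists s, ann (g m) s /\ ~ ann m s.
  move=> m Hm.
  have [m' Hm'] := step m Hm.
  have := @epsilon_spec M (inhabits 0) (fun m' => m <> 0 -> m' <> 0 /\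
     (exists x, m' = cact act x m) /\ exists s, ann m' s /\ ~ ann m s).
  by move=> /(_ (ex_intro _ m' (fun _ => Hm'))) /(_ Hm).
pose u n := iter n g m0.
have Hu : forall n, u n <> 0.
  by elim=> [|n IH] //=; have [] := Hg _ IH.
have HI : forall n, is_ideal (ann (u n)) by move=> n; apply: ann_ideal.
have Hinc : forall n x, ann (u n) x -> ann (u n.+1) x.
  move=> n x Hx; change (ann (g (u n)) x).
  have [_ [[y ->] _]] := Hg _ (Hu n); exact: ann_sub.
have [N HN] := HC HI Hinc.
have [_ [_ [s [Hs Hns]]]] := Hg _ (Hu N).
by apply: Hns; apply/(HN N.+1 (leqnSn N) s).
Qed.

Lemma ass_sub P Q : simple_D f act -> associated_prime act P ->
  associated_prime act Q -> forall r, P r -> Q r.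
Proof.
case=> _ Hsimp [HP [mP HmP]] [HQ [mQ HmQ]] r Pr.
pose Z := fun x : M => x = 0.
have HZ : is_Dsubmodule f act Z.
  split; rewrite /Z.
  - done.
  - by move=> x y -> ->; rewrite subr0.
  - by move=> d x Hd ->; exact: (act0 Hmod Hd).
pose T := fun x : M => True.
have HT : is_Dsubmodule f act T by split.
have HL := tors_sub_mod Hmod P HZ HT.
case: (Hsimp _ HL) => [H0|Hall].
- exfalso; case: HP => _ P1 _; apply: P1; apply/HmP.
  have -> : mP = 0.
    apply: H0; split => //; exists 1%N => p Pp /=; rewrite /Z; exact/HmP.
  exact: (cactr0 Hmod 1).
- have [_ [n Hn]] := Hall mQ.
  have := (tors_pow Hmod Pr Hn); rewrite /Z => H.
  apply: (@prime_pow_in _ _ HQ _ n); exact/HmQ.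
Qed.

Lemma part2 : simple_D f act -> exists P, associated_prime act P /\
       forall Q, associated_prime act Q -> forall r, Q r <-> P r.
Proof.
move=> Hs; have Hs' := Hs; case: Hs' => [[m0 Hm0] _].
have [m Hm] := exists_maximal Hm0.
have HA : associated_prime act (ann m).
  by split; [exact: maximal_prime | exists m].
exists (ann m); split=> // Q HQ r; split; [exact: (ass_sub Hs HQ HA) | exact: (ass_sub Hs HA HQ)].
Qed.
End Part2.

Lemma in_map_iota (T : Type) (F : nat -> T) n : forall a j, (a <= j)%N -> (j < a + n)%N ->
  List.In (F j) [seq F i | i <- iota a n].
Proof.
elim: n => [|n IH] a j H1 H2 /=.
- by exfalso; rewrite addn0 in H2; move: (leq_ltn_trans H1 H2); rewrite ltnn.
- case: (eqVneq j a) => [->|ne]; first by left.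
  right; apply: IH; first by rewrite ltn_neqAle eq_sym ne H1.
  by rewrite addSnnS.
Qed.

Unset Implicit Arguments.
Theorem mainTheorem2 (A C : comPzRingType) (f : {rmorphism A -> C})
    (HC : noetherian C) :
  (forall (M : zmodType) (act : (C -> C) -> M -> M),
     is_DCA_module f act -> finite_length_D f act ->
     exists Ps : seq (C -> Prop),
       forall P, associated_prime act P ->
         exists2 Q, List.In Q Ps & forall r, P r <-> Q r) /\
  (forall (M : zmodType) (act : (C -> C) -> M -> M),
     is_DCA_module f act -> simple_D f act ->
     exists P, associated_prime act P /\
       forall Q, associated_prime act Q -> forall r, Q r <-> P r).
Proof.
split.
- move=> M act Hmod [N [S [HS HS0 HSN Hstep]]].
  exists [seq Qi act S i | i <- iota 0 N] => P [HP [m Hm]].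
  have [j jN Hj] := part1_aux Hmod HS HS0 Hstep (leqnn N) HP Hm (HSN m).
  exists (Qi act S j) => //; exact: in_map_iota.
- move=> M act Hmod Hs; exact: part2 Hmod HC Hs.
Qed.
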